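(* A positive semidefinite $d\times d$ matrix $\xi$ is a correlation matrix if and only if $\mathcal P^\dagger(\xi)=I$ for some quantum channel $\mathcal P$ on $S$ satisfying $\mathcal P(\mathsf{St}(S))=\mathsf P(S)$.
   Context: $S$ is a $d$-dimensional quantum system with non-degenerate Hamiltonian $H=\sum_i E_i|i\rangle\langle i|$, $E_1<\dots<E_d$; matrices are written in the eigenbasis $\{|i\rangle\}$. $\mathsf{St}(S)$ is the set of density matrices; $\mathsf P(S)$ is the set of passive states, i.e. states $\sum_i p_i|i\rangle\langle i|$ with $p_1\ge\dots\ge p_d$. A correlation matrix is a positive semidefinite matrix $\xi$ with $\xi_{ii}=1$ for all $i$. $\mathcal P^\dagger$ is the adjoint map: $\mathrm{Tr}[A\mathcal P(B)]=\mathrm{Tr}[\mathcal P^\dagger(A)B]$. *)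

(* Defs.v *)
From mathcomp Require Import all_boot all_order all_algebra.
From mathcomp Require Import reals.
From mathcomp.real_closed Require Export complex.
Set Implicit Arguments. Unset Strict Implicit. Unset Printing Implicit Defensive.
Import Order.TTheory GRing.Theory Num.Theory.
Local Open Scope ring_scope.

Section QDefs.
Variable C : numClosedFieldType.

Definition psd_kernel (I : finType) (A : I -> I -> C) : Prop :=
  (forall i j, A j i = (A i j)^*) /\
  (forall v : I -> C, 0 <= \sum_i \sum_j (v i)^* * A i j * v j).

Definition psd (d : nat) (A : 'M[C]_d) : Prop := psd_kernel (fun i j => A i j).

Definition density (d : nat) (rho : 'M[C]_d) : Prop := psd rho /\ \tr rho = 1.

(* Passive states P(S): states sum_i p_i |i><i| with p_1 >= ... >= p_d
   (indices ordered by increasing energy). *)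
Definition passive (d : nat) (sigma : 'M[C]_d) : Prop :=
  density sigma /\ is_diag_mx sigma /\
  (forall i j : 'I_d, (i <= j)%N -> sigma j j <= sigma i i).

Definition correlation (d : nat) (xi : 'M[C]_d) : Prop :=
  psd xi /\ forall i, xi i i = 1.

(* Complete positivity: for every k, id_k (x) P maps psd operators on C^k (x) C^d
   (an operator on C^k (x) C^d is given by blocks X a b : 'M_d, a b : 'I_k)
   to psd operators. *)
Definition completely_positive (d : nat) (P : 'M[C]_d -> 'M[C]_d) : Prop :=
  forall (k : nat) (X : 'I_k -> 'I_k -> 'M[C]_d),
    psd_kernel (fun p q : 'I_k * 'I_d => X p.1 q.1 p.2 q.2) ->
    psd_kernel (fun p q : 'I_k * 'I_d => P (X p.1 q.1) p.2 q.2).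

Definition trace_preserving (d : nat) (P : 'M[C]_d -> 'M[C]_d) : Prop :=
  forall X, \tr (P X) = \tr X.

Definition channel (d : nat) (P : {linear 'M[C]_d -> 'M[C]_d}) : Prop :=
  completely_positive P /\ trace_preserving P.

Definition image_St_is_passive (d : nat) (P : 'M[C]_d -> 'M[C]_d) : Prop :=
  (forall rho, density rho -> passive (P rho)) /\
  (forall sigma, passive sigma -> exists2 rho, density rho & P rho = sigma).

(* "P^dagger(A) = Y", where P^dagger is the adjoint defined by
   Tr[A P(B)] = Tr[P^dagger(A) B] for all B. *)
Definition adjoint_maps (d : nat) (P : 'M[C]_d -> 'M[C]_d) (A Y : 'M[C]_d) : Prop :=
  forall B, \tr (A *m P B) = \tr (Y *m B).

End QDefs.

(* Main.v *)
Require Import Defs.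
From HB Require Import structures.
From mathcomp Require Import all_boot all_order all_algebra.
From mathcomp Require Import reals.
From mathcomp.real_closed Require Import complex.
From mathcomp Require Import ring lra.
Set Implicit Arguments. Unset Strict Implicit. Unset Printing Implicit Defensive.
Import Order.TTheory GRing.Theory Num.Theory.
Local Open Scope ring_scope.

Section S.
Variable C : numClosedFieldType.
Variable n : nat.
Local Notation d := n.+1.

Definition cc (k : 'I_d) : C := (k.+1%:R)^-1.
Definition Pdiag (B : 'M[C]_d) (i : 'I_d) : C :=
  \sum_(k : 'I_d) ((i <= k)%N%:R * cc k * B k k).
Definition Pf (B : 'M[C]_d) : 'M[C]_d :=
  \matrix_(i, j) ((i == j)%:R * Pdiag B i).

Lemma Pf_lin : linear Pf.
Proof.
move=> a u v; apply/matrixP => i j; rewrite !mxE /Pdiag.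
rewrite !mulr_sumr -big_split; apply: eq_bigr => k _.
rewrite !mxE /=; ring.
Qed.

HB.instance Definition _ := GRing.isLinear.Build _ _ _ _ Pf Pf_lin.

Lemma cc_ge0 k : 0 <= cc k.
Proof. by rewrite /cc invr_ge0 ler0n. Qed.

Lemma sum_le_cc (k : 'I_d) : \sum_(i < d) ((i <= k)%N%:R * cc k) = 1 :> C.
Proof.
rewrite -mulr_suml /cc.
have -> : \sum_(i < d) ((i <= k)%N%:R : C) = k.+1%:R.
  rewrite -natr_sum; congr (_ %:R).
  rewrite -(big_mkord xpredT (fun i => nat_of_bool (i <= k)%N)).
  rewrite (big_cat_nat (n:=k.+1)) //=.
  rewrite (eq_big_nat _ _ (F2 := fun _ => 1%N)); last by move=> i /andP[_ Hi]; rewrite -ltnS Hi.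
  rewrite sum_nat_const_nat (eq_big_nat _ _ (F2 := fun _ => 0%N)).
    by rewrite sum_nat_const_nat muln0 addn0 subn0 muln1.
  by move=> i /andP[Hi _]; rewrite leqNgt Hi.
by rewrite mulfV // pnatr_eq0.
Qed.

Lemma Pf_tr B : \tr (Pf B) = \tr B.
Proof.
rewrite /mxtrace (eq_bigr (fun i => Pdiag B i)); last by move=> i _; rewrite mxE eqxx mul1r.
rewrite /Pdiag exchange_big /=; apply: eq_bigr => k _.
transitivity (B k k * \sum_(i < d) ((i <= k)%N%:R * cc k)); last by rewrite sum_le_cc mulr1.
rewrite mulr_sumr; apply: eq_bigr => i _ /=; ring.
Qed.

Lemma sum_pair (I J : finType) (F : I * J -> C) :
  \sum_p F p = \sum_a \sum_b F (a, b).
Proof. by rewrite pair_big; apply: eq_bigr => -[]. Qed.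

Lemma conj_cc k : (cc k)^* = cc k.
Proof. by rewrite /cc fmorphV rmorph_nat. Qed.

Lemma Pf_cp : completely_positive Pf.
Proof.
move=> k X [herm pos]; split.
  move=> p q; rewrite !mxE /Pdiag.
  case: (eqVneq p.2 q.2) => [e|ne].
    rewrite e rmorphM rmorph_nat; congr (_ * _); rewrite rmorph_sum; apply: eq_bigr => m _.
    rewrite (herm (p.1, m) (q.1, m)) /= !rmorphM rmorph_nat; congr (_ * _ * _); exact: (esym (conj_cc m)).
  by rewrite /= !mul0r rmorph0.
move=> v.
pose w (i m : 'I_d) (p : 'I_k * 'I_d) := if p.2 == m then v (p.1, i) else 0.
have HQ : forall i m, \sum_p \sum_q (w i m p)^* * X p.1 q.1 p.2 q.2 * w i m q =
   \sum_a \sum_b (v (a, i))^* * X a b m m * v (b, i).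
  move=> i m; rewrite sum_pair; apply: eq_bigr => a _.
  rewrite (bigD1 m) //= [X in _ + X]big1 ?addr0; last first.
    move=> j ne; rewrite /w /= (negbTE ne) rmorph0.
    by apply: big1 => q _; rewrite !mul0r.
  rewrite sum_pair; apply: eq_bigr => b _.
  rewrite (bigD1 m) //= [X in _ + X]big1 ?addr0; last first.
    by move=> j ne; rewrite /w /= (negbTE ne) mulr0.
  by rewrite /w /= eqxx.
have -> : \sum_p \sum_q (v p)^* * Pf (X p.1 q.1) p.2 q.2 * v q =
  \sum_(i : 'I_d) \sum_(m : 'I_d) ((i <= m)%N%:R * cc m) *
     (\sum_a \sum_b (v (a, i))^* * X a b m m * v (b, i)).
  transitivity (\sum_(a : 'I_k) \sum_(i : 'I_d) \sum_(b : 'I_k) \sum_(m : 'I_d) (v (a, i))^* *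
     ((i <= m)%N%:R * cc m * X a b m m) * v (b, i)).
    rewrite sum_pair; apply: eq_bigr => a _; apply: eq_bigr => i _.
    rewrite sum_pair; apply: eq_bigr => b _.
    rewrite (bigD1 i) //= [X in _ + X]big1 ?addr0; last first.
      by move=> j ne; rewrite mxE eq_sym (negbTE ne) mul0r mulr0 mul0r.
    rewrite mxE eqxx mul1r /Pdiag mulr_sumr mulr_suml.
    by apply: eq_bigr => m _.
  rewrite exchange_big; apply: eq_bigr => i _.
  transitivity (\sum_(a : 'I_k) \sum_(m : 'I_d) \sum_(b : 'I_k) (v (a, i))^* *
     ((i <= m)%N%:R * cc m * X a b m m) * v (b, i)).
    by apply: eq_bigr => a _; rewrite exchange_big.
  rewrite exchange_big; apply: eq_bigr => m _.
  rewrite mulr_sumr; apply: eq_bigr => a _.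
  rewrite mulr_sumr; apply: eq_bigr => b _ /=; ring.
apply: sumr_ge0 => i _; apply: sumr_ge0 => m _.
rewrite -HQ; apply: mulr_ge0; last exact: pos.
by apply: mulr_ge0; [exact: ler0n | exact: cc_ge0].
Qed.

Definition dmx (f : 'I_d -> C) : 'M[C]_d := \matrix_(i, j) ((i == j)%:R * f i).

Lemma Pf_dmx B : Pf B = dmx (Pdiag B).
Proof. by []. Qed.

Lemma dmx_diag f : is_diag_mx (dmx f).
Proof.
apply/is_diag_mxP => i j ne; rewrite mxE.
have -> : (i == j) = false by apply/negbTE; apply: contra ne => /eqP ->.
by rewrite mul0r.
Qed.

Lemma dmx_ii f i : dmx f i i = f i.
Proof. by rewrite mxE eqxx mul1r. Qed.

Lemma psd_dmx f : (forall i, 0 <= f i) -> psd (dmx f).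
Proof.
move=> f0; split.
  move=> i j; rewrite !mxE eq_sym; case: eqP => [->|_].
    by rewrite /= mulr1n mul1r geC0_conj.
  by rewrite !mul0r rmorph0.
move=> v; apply: sumr_ge0 => i _.
rewrite (bigD1 i) //= [X in _ + X]big1 ?addr0; last first.
  by move=> j ne; rewrite mxE eq_sym (negbTE ne) mul0r mulr0 mul0r.
rewrite mxE eqxx mul1r mulrC mulrA; apply: mulr_ge0; last exact: f0.
exact: mul_conjC_ge0.
Qed.

Lemma psd_diag_ge0 (A : 'M[C]_d) k : psd A -> 0 <= A k k.
Proof.
move=> [_ pos]; have := pos (fun i => (i == k)%:R).
rewrite (bigD1 k) //= [X in _ + X]big1 ?addr0; last first.
  by move=> i ne; apply: big1 => j _; rewrite (negbTE ne) rmorph0 !mul0r.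
rewrite (bigD1 k) //= [X in _ + X]big1 ?addr0; last first.
  by move=> j ne; rewrite (negbTE ne) mulr0.
by rewrite eqxx rmorph1 mul1r mulr1.
Qed.

Lemma diag_dmx (A : 'M[C]_d) : is_diag_mx A -> A = dmx (fun i => A i i).
Proof.
move/is_diag_mxP => H; apply/matrixP => i j; rewrite mxE.
case: (eqVneq i j) => [->|ne]; first by rewrite mul1r.
by rewrite mul0r H //; apply: contra ne => /eqP/val_inj ->.
Qed.

Lemma count_lt m : (m <= d)%N -> \sum_(i < d) ((i < m)%N%:R : C) = m%:R.
Proof.
move=> hm; rewrite -natr_sum; congr (_ %:R).
rewrite -(big_mkord xpredT (fun i => nat_of_bool (i < m)%N)).
rewrite (big_cat_nat (n:=m)) //=.
rewrite (eq_big_nat _ _ (F2 := fun _ => 1%N)); last by move=> i /andP[_ ->].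
rewrite sum_nat_const_nat (eq_big_nat _ _ (F2 := fun _ => 0%N)).
  by rewrite sum_nat_const_nat muln0 addn0 subn0 muln1.
by move=> i /andP[Hi _]; rewrite ltnNge Hi.
Qed.

Lemma Pdiag_ge0 (B : 'M[C]_d) : psd B -> forall i, 0 <= Pdiag B i.
Proof.
move=> pB i; apply: sumr_ge0 => k _; apply: mulr_ge0; last exact: psd_diag_ge0.
by apply: mulr_ge0; [exact: ler0n | exact: cc_ge0].
Qed.

Lemma Pdiag_mono (B : 'M[C]_d) : psd B -> forall i j : 'I_d, (i <= j)%N ->
  Pdiag B j <= Pdiag B i.
Proof.
move=> pB i j ij; apply: ler_sum => k _; rewrite -!mulrA; apply: ler_wpM2r.
  by apply: mulr_ge0; [exact: cc_ge0 | exact: psd_diag_ge0].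
rewrite ler_nat; case: (leqP j k) => // jk.
by rewrite (leq_trans ij jk).
Qed.

Lemma Pf_passive rho : density rho -> passive (Pf rho).
Proof.
move=> [pr tr]; split; [split|split].
- by rewrite Pf_dmx; apply: psd_dmx; exact: Pdiag_ge0.
- by rewrite Pf_tr.
- by rewrite Pf_dmx; exact: dmx_diag.
- by move=> i j ij; rewrite Pf_dmx !dmx_ii; exact: Pdiag_mono.
Qed.

Lemma Pf_surj sigma : passive sigma -> exists2 rho, density rho & Pf rho = sigma.
Proof.
move=> [[ps trs] [dg ord]].
pose s (m : nat) : C := if (m < d)%N then sigma (inord m) (inord m) else 0.
have sE (k : 'I_d) : s k = sigma k k by rewrite /s ltn_ord inord_val.
pose q (k : 'I_d) : C := k.+1%:R * (s k - s k.+1).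
have q0 k : 0 <= q k.
  apply: mulr_ge0; first exact: ler0n.
  rewrite subr_ge0 sE /s; case: ifP => hk.
    by apply: ord; rewrite inordK.
  exact: psd_diag_ge0.
have HP : Pf (dmx q) = sigma.
  rewrite [RHS](diag_dmx dg) Pf_dmx; apply/matrixP => i j; rewrite !mxE.
  congr (_ * _); rewrite /Pdiag.
  transitivity (\sum_(k < d) (nat_of_bool (i <= k)%N)%:R * (s k - s k.+1)).
    apply: eq_bigr => k _; rewrite dmx_ii /q /cc mulrA -(mulrA _ _ k.+1%:R).
    by rewrite mulVf ?pnatr_eq0 // mulr1.
  rewrite -(big_mkord xpredT (fun k => (nat_of_bool (i <= k)%N)%:R * (s k - s k.+1))).
  rewrite (big_cat_nat (n:=i)) //=; last exact: ltnW.
  rewrite big_nat_cond big1 ?add0r; last first.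
    by move=> k /andP[/andP[_ hk] _]; rewrite leqNgt hk mul0r.
  rewrite (eq_big_nat _ _ (F2 := fun k => - (s k.+1 - s k))); last first.
    by move=> k /andP[hk _]; rewrite hk mul1r opprB.
  rewrite sumrN telescope_sumr; last exact: ltnW.
  by rewrite opprB /s ltnn subr0 ltn_ord inord_val.
exists (dmx q) => //; split; first exact: psd_dmx.
by rewrite -Pf_tr HP.
Qed.

Lemma tr_mul_dmx (A : 'M[C]_d) g : \tr (A *m dmx g) = \sum_i A i i * g i.
Proof.
rewrite /mxtrace; apply: eq_bigr => i _; rewrite mxE.
rewrite (bigD1 i) //= [X in _ + X]big1 ?addr0; last first.
  by move=> j ne; rewrite mxE (negbTE ne) mul0r mulr0.
by rewrite dmx_ii.
Qed.

Lemma tau_passive (k : 'I_d) : passive (dmx (fun i => (i <= k)%N%:R * cc k)).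
Proof.
split; [split|split].
- by apply: psd_dmx => i; apply: mulr_ge0; [exact: ler0n | exact: cc_ge0].
- by rewrite /mxtrace (eq_bigr _ (fun i _ => dmx_ii _ i)) sum_le_cc.
- exact: dmx_diag.
- move=> i j ij; rewrite !dmx_ii; apply: ler_wpM2r; first exact: cc_ge0.
  rewrite ler_nat; case: (leqP j k) => // jk.
  by rewrite (leq_trans ij jk).
Qed.
End S.

Theorem mainTheorem7 (R : realType) (d : nat) (d_gt0 : (0 < d)%N)
  (xi : 'M[R[i]]_d) (xi_psd : psd xi) :
  correlation xi <->
  exists P : {linear 'M[R[i]]_d -> 'M[R[i]]_d},
    [/\ channel P, image_St_is_passive P & adjoint_maps P xi 1%:M].
Proof.
case: d d_gt0 xi xi_psd => [//|n] _ xi xi_psd; split.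
  move=> [_ hdiag]; exists (@Pf _ n); split.
  - by split; [exact: Pf_cp | exact: Pf_tr].
  - by split; [exact: Pf_passive | exact: Pf_surj].
  - move=> B; rewrite mul1mx -[in RHS]Pf_tr !Pf_dmx tr_mul_dmx /mxtrace.
    by apply: eq_bigr => i _; rewrite hdiag mul1r dmx_ii.
move=> [P [[cpP tpP] [imP surjP] adj]]; split => //.
have key (k : 'I_n.+1) : \sum_(i : 'I_n.+1) (i <= k)%N%:R * xi i i = k.+1%:R.
  have [rho [_ trr] Pr] := surjP _ (@tau_passive _ n k).
  have := adj rho; rewrite Pr mul1mx trr tr_mul_dmx => H.
  have -> : (k.+1%:R : R[i]) = k.+1%:R * \sum_(i : 'I_n.+1) xi i i * ((i <= k)%N%:R * @cc _ n k).
    by rewrite H mulr1.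
  rewrite mulr_sumr; apply: eq_bigr => i _; rewrite /cc mulrCA.
  by rewrite [X in xi i i * X]mulrCA mulfV ?pnatr_eq0 // mulr1 mulrC.
suff H : forall m, (m <= n.+1)%N -> forall i : 'I_n.+1, (i < m)%N -> xi i i = 1.
  by move=> i; apply: (H n.+1).
elim=> [//|m IH] hm i.
rewrite ltnS leq_eqVlt => /orP[/eqP ei|lt]; last by apply: IH => //; exact: ltnW.
have E : \sum_(j : 'I_n.+1) (j <= i)%N%:R * xi j j =
    \sum_(j : 'I_n.+1) (j < i)%N%:R + xi i i.
  rewrite (bigD1 i) //= leqnn mul1r addrC; congr (_ + _).
  rewrite [RHS](bigD1 i) //= ltnn add0r; apply: eq_bigr => j ne.
  case: (ltnP j i) => ji.
    rewrite (ltnW ji) IH ?mulr1 //; [exact: ltnW | by rewrite -ei].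
  by rewrite leqNgt ltn_neqAle ji andbT; rewrite eq_sym in ne; rewrite -(inj_eq val_inj) /= in ne; rewrite ne mul0r.
have := key i; rewrite E count_lt; last exact: ltnW.
by rewrite -natr1 => /addrI.
Qed.
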